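(* For each finite $C$-group $(G,Y)$ there is a constant $T\in\mathbb N$ such that if $s_1,s_2\in S(G,Y)^G$ satisfy $\tau_i(s_1)\ge T$ for $i=1,\dots,m$ and $\alpha_G(s_1)=\alpha_G(s_2)$, then $s_1=s_2$.
   Context: A $C$-group is a pair $(G,Y)$, $G$ a group, $Y\subset G$ a union of finitely many conjugacy classes with $1\notin Y$, such that $G$ has a presentation with generators the elements of $Y$ and defining relations all of the form $z^{-1}yz=y'$ ($y,y',z\in Y$); it is finite if $Y$ is finite. Write $Y=C_1\sqcup\dots\sqcup C_m$ as its decomposition into conjugacy classes of $G$. The factorization semigroup $S(G,Y)$ is generated by symbols $x_y$, $y\in Y$, subject to $x_{g_1}x_{g_2}=x_{g_2}x_{g_2^{-1}g_1g_2}=x_{g_1g_2g_1^{-1}}x_{g_1}$ ($g_1,g_2\in Y$); $\alpha_G:S(G,Y)\to G$, $x_y\mapsto y$. For $s=x_{g_1}\cdots x_{g_n}$, $G_s$ is the subgroup generated by $g_1,\dots,g_n$ (independent of the expression), and $S(G,Y)^G=\{s:G_s=G\}$. $\tau_i(s)$ denotes the number of factors $x_y$ of $s$ with $y\in C_i$. *)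

(* Defs.v *)
From HB Require Import structures.
From mathcomp Require Import all_boot.
From mathcomp Require Import boolp.

Set Implicit Arguments.
Unset Strict Implicit.
Unset Printing Implicit Defensive.

Local Open Scope group_scope.

Section CGroups.
Variable G : groupType.

(* the subgroup generated by the elements of a list [s] is all of [G] *)
Definition generates (s : seq G) : Prop :=
  forall P : G -> Prop,
    P 1 -> (forall x y, P x -> P y -> P (x * y)) -> (forall x, P x -> P x^-1) ->
    (forall x, x \in s -> P x) -> forall g, P g.

(* (G, Y) is a C-group: Y is a finite union of conjugacy classes not containing 1,
   and G = < Y | z^-1 y z = y' (y,y',z in Y) >.  The presentation is expressed by
   its universal property: Y generates G and every map f : G -> H (H any group)
   respecting all conjugation relations z^-1 y z = y' among elements of Y extends
   to a group homomorphism G -> H agreeing with f on Y. *)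
Definition is_Cgroup (Y : seq G) : Prop :=
  [/\ 1 \notin Y,
      (forall y g, y \in Y -> y ^ g \in Y),
      generates Y &
      forall (H : groupType) (f : G -> H),
        (forall y z, y \in Y -> z \in Y -> f (y ^ z) = f y ^ f z) ->
        exists phi : G -> H,
          (forall a b, phi (a * b) = phi a * phi b) /\
          (forall y, y \in Y -> phi y = f y)].

(* Elements of S(G,Y) are represented by words (lists of letters y in Y, the
   word [:: g1; ...; gn] standing for x_{g1} ... x_{gn}); equality in S(G,Y) is
   the congruence generated by the defining relations
   x_{g1} x_{g2} = x_{g2} x_{g2^-1 g1 g2} = x_{g1 g2 g1^-1} x_{g1}. *)
Inductive fs_step : seq G -> seq G -> Prop :=
  | fs_step1 a b g1 g2 :
      fs_step (a ++ [:: g1; g2] ++ b) (a ++ [:: g2; g1 ^ g2] ++ b)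
  | fs_step2 a b g1 g2 :
      fs_step (a ++ [:: g1; g2] ++ b) (a ++ [:: g1 * g2 * g1^-1; g1] ++ b).

Inductive fs_eq : seq G -> seq G -> Prop :=
  | fs_refl s : fs_eq s s
  | fs_of_step s t : fs_step s t -> fs_eq s t
  | fs_sym s t : fs_eq s t -> fs_eq t s
  | fs_trans s t u : fs_eq s t -> fs_eq t u -> fs_eq s u.

Definition is_word (Y : seq G) (s : seq G) : Prop := all (fun x => x \in Y) s.

Definition alphaG (s : seq G) : G := foldr (fun x r => x * r) 1 s.

(* tau for the conjugacy class of y in G: number of letters of s conjugate to y *)
Definition tau (y : G) (s : seq G) : nat :=
  count (fun x => `[< exists g : G, x = y ^ g >]) s.

End CGroups.

(* Main.v *)
Require Import Defs.
From HB Require Import structures.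
From mathcomp Require Import all_boot.
From mathcomp Require Import boolp.
From mathcomp Require Import zify.
From Stdlib Require ZArith.
Set Implicit Arguments.
Unset Strict Implicit.
Unset Printing Implicit Defensive.
Local Open Scope group_scope.

Section PermX.
Variable X : Type.
Record xperm := XPerm { pf : X -> X; pg : X -> X; pK : cancel pf pg; pKV : cancel pg pf }.

Lemma xperm_eq (p q : xperm) : pf p = pf q -> p = q.
Proof.
case: p => f g K KV; case: q => f' g' K' KV' /= E; subst f'.
have Eg : g = g'.
  apply: funext => x; by rewrite -{1}(KV' x) K.
subst g'; congr XPerm; exact: Prop_irrelevance.
Qed.

HB.instance Definition _ := gen_eqMixin xperm.
HB.instance Definition _ := gen_choiceMixin xperm.

Definition xone := @XPerm id id (fun _ => erefl) (fun _ => erefl).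
Definition xinv (p : xperm) := @XPerm (pg p) (pf p) (pKV p) (pK p).
Lemma xmul_K (p q : xperm) : cancel (pf p \o pf q) (pg q \o pg p).
Proof. by move=> x /=; rewrite pK pK. Qed.
Lemma xmul_KV (p q : xperm) : cancel (pg q \o pg p) (pf p \o pf q).
Proof. by move=> x /=; rewrite pKV pKV. Qed.
Definition xmul (p q : xperm) := XPerm (xmul_K p q) (xmul_KV p q).

Lemma xmulA : associative xmul. Proof. by move=> p q r; apply: xperm_eq. Qed.
Lemma xmul1 : left_id xone xmul. Proof. by move=> p; apply: xperm_eq. Qed.
Lemma xmulr1 : right_id xone xmul. Proof. by move=> p; apply: xperm_eq. Qed.
Lemma xmulV : left_inverse xone xinv xmul.
Proof. by move=> p; apply: xperm_eq; apply: funext => x /=; rewrite pK. Qed.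
Lemma xmulVr : right_inverse xone xinv xmul.
Proof. by move=> p; apply: xperm_eq; apply: funext => x /=; rewrite pKV. Qed.

HB.instance Definition _ := isGroup.Build xperm xmulA xmul1 xmulr1 xmulV xmulVr.

Lemma xpermM (p q : xperm) x : pf (p * q) x = pf p (pf q x). Proof. by []. Qed.
Lemma xpermV (p : xperm) x : pf (p^-1) x = pg p x. Proof. by []. Qed.
Lemma xperm1 x : pf (1 : xperm) x = x. Proof. by []. Qed.
End PermX.

Section Basic.
Variable G : groupType.
Implicit Types s t u a b : seq G.
Implicit Types x g h : G.

Lemma fs_eq_sym s t : fs_eq s t -> fs_eq t s. Proof. exact: fs_sym. Qed.
Lemma fs_eq_trans t s u : fs_eq s t -> fs_eq t u -> fs_eq s u. Proof. exact: fs_trans. Qed.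

Lemma fs_step_cat a b s t : fs_step s t -> fs_step (a ++ s ++ b) (a ++ t ++ b).
Proof.
case=> a0 b0 g1 g2.
- have E x y : a ++ (a0 ++ [:: x; y] ++ b0) ++ b = (a ++ a0) ++ [:: x; y] ++ (b0 ++ b).
    by rewrite !catA.
  by rewrite !E; apply: fs_step1.
- have E x y : a ++ (a0 ++ [:: x; y] ++ b0) ++ b = (a ++ a0) ++ [:: x; y] ++ (b0 ++ b).
    by rewrite !catA.
  by rewrite !E; apply: fs_step2.
Qed.

Lemma fs_cat a b s t : fs_eq s t -> fs_eq (a ++ s ++ b) (a ++ t ++ b).
Proof.
elim=> {s t}.
- by move=> s; apply: fs_refl.
- by move=> s t st; apply: fs_of_step; apply: fs_step_cat.
- by move=> s t _ H; apply: fs_sym.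
- by move=> s t u _ H1 _ H2; apply: fs_trans H1 H2.
Qed.

Lemma fs_catl a s t : fs_eq s t -> fs_eq (a ++ s) (a ++ t).
Proof. by move=> H; have := fs_cat a [::] H; rewrite !cats0. Qed.
Lemma fs_catr b s t : fs_eq s t -> fs_eq (s ++ b) (t ++ b).
Proof. by move=> H; have := fs_cat [::] b H. Qed.

Definition cw (h : G) s := map (fun x => x ^ h) s.

Lemma cwM h k s : cw k (cw h s) = cw (h * k) s.
Proof. by rewrite /cw -map_comp; apply: eq_map => x /=; rewrite conjgM. Qed.
Lemma cw1 s : cw 1 s = s.
Proof. by rewrite /cw; rewrite (eq_map (@conjg1 G)) map_id. Qed.
Lemma cwK h s : cw h^-1 (cw h s) = s.
Proof. by rewrite cwM mulgV cw1. Qed.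
Lemma cwKV h s : cw h (cw h^-1 s) = s.
Proof. by rewrite cwM mulVg cw1. Qed.

Lemma fs_cw h s t : fs_eq s t -> fs_eq (cw h s) (cw h t).
Proof.
elim=> {s t}.
- by move=> s; apply: fs_refl.
- move=> s t; case=> a b g1 g2; rewrite /cw !map_cat /=; apply: fs_of_step.
  + by rewrite conjJg; apply: fs_step1.
  + have -> : (g1 * g2 * g1^-1) ^ h = g1 ^ h * g2 ^ h * (g1 ^ h)^-1.
      by rewrite !conjMg conjVg.
    exact: fs_step2.
- by move=> s t _ H; apply: fs_sym.
- by move=> s t u _ H1 _ H2; apply: fs_trans H1 H2.
Qed.

Lemma alphaG_cat s t : alphaG (s ++ t) = alphaG s * alphaG t.
Proof. by elim: s => [|x s IH] /=; rewrite ?mul1g // IH mulgA. Qed.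
Lemma alphaG_cons x s : alphaG (x :: s) = x * alphaG s. Proof. by []. Qed.
Lemma alphaG1 x : alphaG [:: x] = x. Proof. by rewrite /= mulg1. Qed.

Lemma alphaG_cw h s : alphaG (cw h s) = (alphaG s) ^ h.
Proof. elim: s => [|x s IH] /=; first by rewrite conj1g. by rewrite IH conjMg. Qed.

Lemma MR1 g u : fs_eq (g :: u) (u ++ [:: g ^ alphaG u]).
Proof.
elim: u g => [|x u IH] g /=; first by rewrite conjg1; apply: fs_refl.
apply: (fs_eq_trans (t := x :: g ^ x :: u)).
  by apply: fs_of_step; have := @fs_step1 G [::] u g x.
by rewrite conjgM; apply: (fs_catl [:: x]); apply: IH.
Qed.

Lemma MR a u : fs_eq (a ++ u) (u ++ cw (alphaG u) a).
Proof.
elim: a => [|g a IH] /=; first by rewrite cats0; apply: fs_refl.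
apply: (fs_eq_trans (t := g :: u ++ cw (alphaG u) a)).
  by apply: (fs_catl [:: g]).
by have := fs_catr (cw (alphaG u) a) (MR1 g u); rewrite -catA.
Qed.

Lemma MK1 g u : fs_eq (g :: u) (cw g^-1 u ++ [:: g]).
Proof.
elim: u => [|x u IH] /=; first by apply: fs_refl.
apply: (fs_eq_trans (t := g * x * g^-1 :: g :: u)).
  by apply: fs_of_step; have := @fs_step2 G [::] u g x.
have -> : x ^ g^-1 = g * x * g^-1 by rewrite conjgE invgK mulgA.
by apply: (fs_catl [:: _]); apply: IH.
Qed.

Lemma MK a u : fs_eq (a ++ u) (cw (alphaG a)^-1 u ++ a).
Proof.
elim: a u => [|g a IH] u /=; first by rewrite invg1 cw1 cats0; apply: fs_refl.
apply: (fs_eq_trans (t := g :: cw (alphaG a)^-1 u ++ a)).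
  by apply: (fs_catl [:: g]).
have := fs_catr a (MK1 g (cw (alphaG a)^-1 u)); rewrite -catA cwM -invgM.
by [].
Qed.

Lemma cw_fix h s : (forall x, x \in s -> commute h x) -> cw h s = s.
Proof.
move=> H; rewrite /cw -{2}(map_id s); apply/eq_in_map => x /H hx.
by rewrite /= conjgE -hx mulKg.
Qed.

Lemma COMM a u : (forall x, x \in u -> commute (alphaG a) x) -> fs_eq (a ++ u) (u ++ a).
Proof.
move=> H; have := MK a u; rewrite cw_fix //.
by move=> x /H hx; apply: commute_sym; apply: commuteV; apply: commute_sym.
Qed.

End Basic.

Section Class.
Variable G : groupType.
Implicit Types s t u a b : seq G.
Implicit Types x y z g h : G.

Definition cj y x : bool := `[< exists g : G, x = y ^ g >].

Lemma tauE y s : tau y s = count (cj y) s. Proof. by []. Qed.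

Lemma cjP y x : reflect (exists g, x = y ^ g) (cj y x).
Proof. exact: asboolP. Qed.

Lemma cj_refl y : cj y y.
Proof. by apply/cjP; exists 1; rewrite conjg1. Qed.

Lemma cj_conj y x h : cj y (x ^ h) = cj y x.
Proof.
apply/cjP/cjP => [[g E]|[g ->]]; last by exists (g * h); rewrite conjgM.
by exists (g * h^-1); rewrite conjgM -E conjgK.
Qed.

Lemma cj_conjV y x z : cj y (x * z * x^-1) = cj y z.
Proof.
have -> : x * z * x^-1 = z ^ x^-1 by rewrite conjgE invgK mulgA.
exact: cj_conj.
Qed.

Lemma cj_sym y x : cj y x = cj x y.
Proof.
by apply/cjP/cjP => [[g ->]|[g ->]]; exists g^-1; rewrite conjgK.
Qed.

Lemma cj_trans x y z : cj y x -> cj x z -> cj y z.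
Proof. by move=> /cjP[g ->] /cjP[h ->]; rewrite cj_conj cj_conj cj_refl. Qed.

Lemma cjC y y' x : cj y y' -> cj y x = cj y' x.
Proof.
move=> H; apply/idP/idP => Hx; first by apply: cj_trans Hx; rewrite cj_sym.
exact: cj_trans Hx.
Qed.

Lemma tau_cls y y' s : cj y y' -> tau y s = tau y' s.
Proof. by move=> H; rewrite !tauE; apply: eq_count => x; apply: cjC. Qed.

Lemma tau_cw y h s : tau y (cw h s) = tau y s.
Proof. by rewrite !tauE /cw count_map; apply: eq_count => x /=; rewrite cj_conj. Qed.

Lemma tau_cat y s t : tau y (s ++ t) = tau y s + tau y t.
Proof. by rewrite !tauE count_cat. Qed.

Lemma tau_cons y x s : tau y (x :: s) = cj y x + tau y s.
Proof. by []. Qed.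

Lemma tau_fs y s t : fs_eq s t -> tau y s = tau y t.
Proof.
elim=> {s t} //.
  move=> s t; case=> a b g1 g2; rewrite !tau_cat !tau_cons.
  + by rewrite cj_conj (addnCA (cj y g1)).
  + by rewrite cj_conjV (addnCA (cj y g1)).
- by move=> s t u _ -> _ ->.
Qed.

Definition in_span s x : Prop :=
  forall P : G -> Prop,
    P 1 -> (forall x y, P x -> P y -> P (x * y)) -> (forall x, P x -> P x^-1) ->
    (forall x, x \in s -> P x) -> P x.

Definition spans s t := forall x, x \in t -> in_span s x.

Lemma span_mem s x : x \in s -> in_span s x.
Proof. by move=> Hx P _ _ _ HP; apply: HP. Qed.

Lemma span_mul s x y : in_span s x -> in_span s y -> in_span s (x * y).
Proof. by move=> Hx Hy P P1 PM PV Ps; apply PM; [apply: (Hx P) | apply: (Hy P)]. Qed.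

Lemma span_inv s x : in_span s x -> in_span s x^-1.
Proof. by move=> Hx P P1 PM PV Ps; apply PV; apply: (Hx P). Qed.

Lemma span_trans s t x : spans s t -> in_span t x -> in_span s x.
Proof. by move=> Hst Hx P P1 PM PV Ps; apply: (Hx P) => // y /Hst; apply. Qed.

Lemma generates_spans s t : spans s t -> generates t -> generates s.
Proof. by move=> Hst Ht P P1 PM PV Ps g; apply: (Ht P) => // y /Hst; apply. Qed.

Lemma spans_sub s t : {subset t <= s} -> spans s t.
Proof. by move=> H x /H; apply: span_mem. Qed.

Lemma generates_sub s t : generates s -> {subset s <= t} -> generates t.
Proof. by move=> Hs Hst; apply: generates_spans Hs; apply: spans_sub. Qed.

Lemma spans_nil s : spans s [::].
Proof. by []. Qed.
Lemma spans_cons s x t : in_span s x -> spans s t -> spans s (x :: t).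
Proof. by move=> Hx Ht z; rewrite inE => /orP[/eqP->|/Ht]. Qed.
Lemma spans_cat s t u : spans s t -> spans s u -> spans s (t ++ u).
Proof. by move=> Ht Hu z; rewrite mem_cat => /orP[/Ht|/Hu]. Qed.

Lemma spans_mid a b m m' :
  (forall x, x \in m' -> in_span (a ++ m ++ b) x) -> spans (a ++ m ++ b) (a ++ m' ++ b).
Proof.
move=> H x; rewrite !mem_cat => /orP[Ha|/orP[/H //|Hb]]; apply: span_mem.
  by rewrite mem_cat Ha.
by rewrite !mem_cat Hb !orbT.
Qed.

Lemma spans_step s t : fs_step s t -> spans s t /\ spans t s.
Proof.
have Hm (a b c : seq G) x : x \in b -> in_span (a ++ b ++ c) x.
  by move=> H; apply: span_mem; rewrite !mem_cat H orbT.
case=> a b g1 g2; split; apply: spans_mid => x; rewrite !inE => /orP[/eqP->|/eqP->].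
- by apply: Hm; rewrite !inE eqxx orbT.
- by rewrite conjgE; apply: span_mul; [apply: span_inv|apply: span_mul];
     apply: Hm; rewrite !inE eqxx ?orbT.
- have E : g1 = g2 * (g1 ^ g2) * g2^-1 by rewrite conjgE mulgA mulgV mul1g mulgK.
  rewrite [X in in_span _ X]E.
  by apply: span_mul; [apply: span_mul|apply: span_inv];
     apply: Hm; rewrite !inE eqxx ?orbT.
- by apply: Hm; rewrite !inE eqxx ?orbT.
- by apply: span_mul; [apply: span_mul|apply: span_inv];
     apply: Hm; rewrite !inE eqxx ?orbT.
- by apply: Hm; rewrite !inE eqxx ?orbT.
- by apply: Hm; rewrite !inE eqxx ?orbT.
- have E : g2 = g1^-1 * (g1 * g2 * g1^-1) * g1 by rewrite !mulgA mulVg mul1g mulgVK.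
  rewrite [X in in_span _ X]E.
  by apply: span_mul; [apply: span_mul; first apply: span_inv|];
     apply: Hm; rewrite !inE eqxx ?orbT.
Qed.

Lemma spans_fs s t : fs_eq s t -> spans s t /\ spans t s.
Proof.
elim=> {s t}.
- by move=> s; split=> x /span_mem.
- by move=> s t /spans_step.
- by move=> s t _ [].
- move=> s t u _ [H1 H1'] _ [H2 H2']; split=> x Hx.
  + by apply: span_trans H1 _; apply: H2.
  + by apply: span_trans H2' _; apply: H1'.
Qed.

Lemma generates_fs s t : fs_eq s t -> generates s -> generates t.
Proof. by move=> /spans_fs [_ H]; apply: generates_spans. Qed.

Lemma generates_catl a s : generates s -> generates (a ++ s).
Proof. by move=> H; apply: (generates_sub H) => x Hx; rewrite mem_cat Hx orbT. Qed.

Variable Y : seq G.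
Hypothesis HY : forall y g, y \in Y -> y ^ g \in Y.

Definition wd s : bool := all (fun x => x \in Y) s.
Lemma wdE s : is_word Y s <-> wd s. Proof. by []. Qed.

Lemma word_cw h s : wd s -> wd (cw h s).
Proof. by move=> /allP H; apply/allP => x /mapP[z /H Hz ->]; apply: HY. Qed.

Lemma word_cat s t : wd (s ++ t) = wd s && wd t.
Proof. exact: all_cat. Qed.

Lemma word_step s t : fs_step s t -> wd s = wd t.
Proof.
case=> a b g1 g2; rewrite !word_cat /=; congr (_ && (_ && _)).
- apply/idP/idP=> /and3P[H1 H2 _]; apply/and3P; split=> //; first exact: HY.
  by rewrite -(conjgK g2 g1); apply: HY.
- apply/idP/idP=> /and3P[H1 H2 _]; apply/and3P; split=> //.
  + have -> : g1 * g2 * g1^-1 = g2 ^ g1^-1 by rewrite conjgE invgK mulgA.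
    exact: HY.
  + have -> : g2 = (g1 * g2 * g1^-1) ^ g1 by rewrite conjgE !mulgA mulVg mul1g mulgVK.
    exact: HY.
Qed.

Lemma word_fs (s t : seq G) : fs_eq s t -> wd s = wd t.
Proof.
elim=> {s t} //.
- by move=> s t /word_step.
- by move=> s t u _ -> _ ->.
Qed.

End Class.

Section PhiAlpha.
Variables (G H : groupType) (Y : seq G) (f : G -> H) (phi : G -> H).
Hypothesis phiM : forall a b, phi (a * b) = phi a * phi b.
Hypothesis phiY : forall y, y \in Y -> phi y = f y.

Lemma phi1 : phi 1 = 1.
Proof.
have := phiM 1 1; rewrite mulg1 => E.
by apply: (@mulgI _ (phi 1)); rewrite mulg1 -E.
Qed.

Lemma phi_alpha s : wd Y s -> phi (alphaG s) = foldr (fun x r => f x * r) 1 s.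
Proof.
elim: s => [|x s IH] /=; first by move=> _; exact: phi1.
by move=> /andP[Hx Hs]; rewrite phiM phiY // IH.
Qed.
End PhiAlpha.

Section Blocks.
Variable G : groupType.
Variable Y : seq G.
Hypothesis HY : forall y g, y \in Y -> y ^ g \in Y.
Variable n : nat.
Hypothesis Hn0 : (0 < n)%N.
Hypothesis Hn : forall y z, y \in Y -> z \in Y -> commute (y ^+ n) z.
Implicit Types s t u a b v zs : seq G.
Implicit Types x y z g h : G.
Local Notation wd := (wd Y).

Definition B z := nseq n z.
Definition bw zs := flatten (map B zs).

Lemma alphaG_nseq k z : alphaG (nseq k z) = z ^+ k.
Proof. by elim: k => [|k IH] //=; rewrite IH expgS. Qed.

Lemma bw_cons z zs : bw (z :: zs) = B z ++ bw zs. Proof. by []. Qed.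
Lemma bw_nil : bw [::] = [::]. Proof. by []. Qed.
Lemma bw_cat zs zs' : bw (zs ++ zs') = bw zs ++ bw zs'.
Proof. by rewrite /bw map_cat flatten_cat. Qed.

Lemma wd_B z : z \in Y -> wd (B z).
Proof. by move=> Hz; rewrite /wd /B all_nseq Hz orbT. Qed.

Lemma wd_bw zs : wd zs -> wd (bw zs).
Proof.
elim: zs => [|z zs IH] //= /andP[Hz Hzs].
by rewrite bw_cons word_cat wd_B // IH.
Qed.

Lemma commute_mull (p q : G) x : commute p x -> commute q x -> commute (p * q) x.
Proof. by move=> Ha Hb; apply: commute_sym; apply: commuteM; apply: commute_sym. Qed.

Lemma alpha_bw_comm zs x : wd zs -> x \in Y -> commute (alphaG (bw zs)) x.
Proof.
move=> Hzs Hx; elim: zs Hzs => [|z zs IH] /=.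
  by move=> _; apply: commute_sym; apply: commute1.
move=> /andP[Hz Hzs]; rewrite bw_cons alphaG_cat alphaG_nseq.
by apply: commute_mull; [apply: Hn | apply: IH].
Qed.

Lemma bw_comm zs u : wd zs -> wd u -> fs_eq (bw zs ++ u) (u ++ bw zs).
Proof.
move=> Hzs /allP Hu; apply: COMM => x /Hu Hx; exact: alpha_bw_comm.
Qed.

Lemma B_comm z u : z \in Y -> wd u -> fs_eq (B z ++ u) (u ++ B z).
Proof.
move=> Hz /allP Hu; apply: COMM => x /Hu Hx; rewrite alphaG_nseq; exact: Hn.
Qed.

Lemma cw_B h z : cw h (B z) = B (z ^ h).
Proof. by rewrite /cw /B map_nseq. Qed.

Lemma tau_B y z : tau y (B z) = (n * cj y z)%N.
Proof. by rewrite tauE /B count_nseq mulnC. Qed.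

Lemma tau_bw y zs : tau y (bw zs) = (n * tau y zs)%N.
Proof.
elim: zs => [|z zs IH]; first by rewrite muln0.
by rewrite bw_cons tau_cat tau_B IH tau_cons mulnDr.
Qed.

Lemma B_conj z a : z \in Y -> wd a -> fs_eq (B z ++ a) (B (z ^ alphaG a) ++ a).
Proof.
move=> Hz Ha; apply: (fs_eq_trans (t := a ++ B (z ^ alphaG a))).
  by have := MR (B z) a; rewrite cw_B.
by apply: fs_sym; apply: B_comm => //; apply: HY.
Qed.

Lemma B_conj_gen z v h : z \in Y -> wd v -> generates v ->
  fs_eq (B z ++ v) (B (z ^ h) ++ v).
Proof.
move=> Hz Hv Hg; move: h z Hz.
apply: (Hg (fun h => forall z, z \in Y -> fs_eq (B z ++ v) (B (z ^ h) ++ v))).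
- by move=> z _; rewrite conjg1; apply: fs_refl.
- move=> x y Px Py z Hz; apply: (fs_eq_trans (Px z Hz)).
  by rewrite conjgM; apply: Py; apply: HY.
- move=> x Px z Hz; apply: fs_sym.
  have := Px (z ^ x^-1) (HY _ Hz); by rewrite conjgKV.
- move=> x Hx z Hz; case/splitPr: Hx Hv Hg => a b Hv _.
  move: Hv; rewrite word_cat /= => /and3P[Ha Hx Hb].
  apply: (fs_eq_trans (t := a ++ (B z ++ [:: x]) ++ b)).
    rewrite catA; have := fs_catr (x :: b) (B_comm Hz Ha); by rewrite -!catA.
  apply: (fs_eq_trans (t := a ++ (B (z ^ x) ++ [:: x]) ++ b)).
    apply: fs_catl; apply: fs_catr; have := B_conj Hz (a := [:: x]); rewrite alphaG1.
    by apply; rewrite /wd /= Hx.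
  rewrite catA; have := fs_catr (x :: b) (B_comm (HY x Hz) Ha); rewrite -!catA.
  by move/fs_sym.
Qed.


Lemma cj_snd y z z' : cj z z' -> cj y z = cj y z'.
Proof. by move=> H; rewrite cj_sym (cj_sym y z') (cjC _ H). Qed.

Lemma has_cj y s : (0 < tau y s)%N -> exists2 x, x \in s & cj y x.
Proof. by rewrite tauE -has_count => /hasP[x Hx Hc]; exists x. Qed.

Lemma bw_canon zs zs' v : wd zs -> wd zs' -> (forall y, y \in Y -> tau y zs = tau y zs') ->
  wd v -> generates v -> fs_eq (bw zs ++ v) (bw zs' ++ v).
Proof.
elim: zs zs' => [|z r IH] zs' Hzs Hzs' Ht Hv Hg.
  case: zs' Hzs' Ht => [|z' r'] Hzs' Ht; first by apply: fs_refl.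
  rewrite /wd /= in Hzs'; move: Hzs' => /andP[Hz' _].
  by have := Ht z' Hz'; rewrite tau_cons cj_refl => /eqP.
move: Hzs => /= /andP[Hz Hr].
have [z' Hz'in Hcj] : exists2 x, x \in zs' & cj z x.
  by apply: has_cj; rewrite -Ht // tau_cons cj_refl.
case/splitPr: Hz'in Hzs' Ht => a b Hw Ht.
move: (Hw); rewrite word_cat /= => /and3P[Ha Hz'Y Hb].
have Hab : wd (a ++ b) by rewrite word_cat Ha.
rewrite bw_cons bw_cat bw_cons -!catA.
apply: (fs_eq_trans (t := B z ++ bw (a ++ b) ++ v)).
  apply: fs_catl; apply: IH => //.
  move=> y Hy; have := Ht y Hy; rewrite tau_cons !tau_cat tau_cons (cj_snd y Hcj).
  lia.
apply: (fs_eq_trans (t := B z' ++ bw (a ++ b) ++ v)).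
  case/cjP: Hcj => g ->.
  apply: B_conj_gen => //; first by rewrite word_cat wd_bw.
  exact: generates_catl.
rewrite bw_cat.
have := fs_catr (bw b ++ v) (B_comm Hz'Y (wd_bw Ha)); rewrite -!catA; by [].
Qed.

Lemma count_cw g s : count (pred1 g) (cw g s) = count (pred1 g) s.
Proof.
rewrite /cw count_map; apply: eq_count => x /=.
have Eg : g = g ^ g by rewrite conjgE mulKg.
by rewrite {2}Eg (inj_eq (@conjg_inj _ g)).
Qed.

Lemma gather1 g s : g \in s -> wd s -> exists s1, [/\ fs_eq s (g :: s1), wd s1,
  (count (pred1 g) s1).+1 = count (pred1 g) s & (size s1).+1 = size s].
Proof.
case/splitPr => a b; rewrite word_cat /= => /and3P[Ha Hg Hb].
exists (cw g a ++ b); split.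
- apply: fs_sym.
  have := fs_catr b (MK [:: g] (cw g a)); rewrite alphaG1 cwK => H.
  exact: (eq_ind _ (fun w => fs_eq _ w) H _ (esym (catA a [:: g] b))).
- by rewrite word_cat word_cw.
- by rewrite !count_cat count_cw /= eqxx; lia.
- by rewrite !size_cat /cw size_map /=; lia.
Qed.

Lemma gather k g s : (k <= count (pred1 g) s)%N -> wd s -> exists s', [/\ fs_eq s (nseq k g ++ s'), wd s',
  (count (pred1 g) s' + k)%N = count (pred1 g) s & (size s' + k)%N = size s].
Proof.
elim: k s => [|k IH] s Hk Hs.
  by exists s; split=> //; rewrite ?addn0 //; apply: fs_refl.
have Hgs : g \in s by rewrite -has_pred1 has_count; lia.
have [s1 [E1 W1 C1 S1]] := gather1 Hgs Hs.
have [s' [E' W' C' S']] := IH s1 ltac:(lia) W1.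
exists s'; split=> //; last lia; last lia.
apply: (fs_eq_trans E1); exact: (fs_catl [:: g] E').
Qed.


Lemma reduce k s : (size s <= k)%N -> wd s -> generates s ->
  exists zs R, [/\ wd zs, wd R, generates R, (forall g, count (pred1 g) R <= n)%N
     & fs_eq s (bw zs ++ R)].
Proof.
elim: k s => [|k IH] s Hk Hs Hg.
  exists [::], s; split=> //; last by apply: fs_refl.
  by move=> g; move: Hk; rewrite leqn0 => /nilP ->.
case: (boolP (has (fun g => n < count (pred1 g) s)%N s)) => [/hasP[g Hgs Hc]|Hno].
- have [s' [E W C S]] := gather (k := n) (ltnW Hc) Hs.
  have Hgs' : g \in s' by rewrite -has_pred1 has_count; lia.
  have Hg' : generates s'.
    apply: (generates_sub (generates_fs E Hg)) => x.
    by rewrite mem_cat mem_nseq => /orP[/andP[_ /eqP->]|].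
  have [zs [R [Wz WR GR CR ER]]] := IH s' ltac:(lia) W Hg'.
  exists (g :: zs), R; split=> //.
    rewrite /wd /=; apply/andP; split; [exact: (allP Hs) | exact: Wz].
  apply: (fs_eq_trans E); rewrite bw_cons -catA; exact: fs_catl.
- exists [::], s; split=> //; last by apply: fs_refl.
  move=> g; case: (boolP (g \in s)) => Hgs.
    by have := hasPn Hno g Hgs; rewrite ltnNge negbK.
  by move/count_memPn: Hgs => ->.
Qed.

Lemma count_mem_sumn (L : seq G) R :
  (count (fun x => x \in L) R <= sumn [seq count (pred1 y) R | y <- L])%N.
Proof.
elim: L => [|y L IH] /=; first by rewrite (eq_count (a2 := pred0)) ?count_pred0.
rewrite (eq_count (a2 := predU (pred1 y) (fun x => x \in L))); last by move=> x; rewrite inE.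
have := count_predUI (pred1 y) (fun x => x \in L) R => E.
by apply: (leq_trans (n := count_mem y R + count (fun x => x \in L) R)); [rewrite -E; apply: leq_addr | rewrite leq_add2l].
Qed.

Lemma sumn_map_le (L : seq G) (f g : G -> nat) :
  (forall y, f y <= g y)%N -> (sumn (map f L) <= sumn (map g L))%N.
Proof. by move=> H; elim: L => //= y L IH; apply: leq_add. Qed.

Lemma size_le_sumn R : wd R -> (size R <= sumn [seq count (pred1 y) R | y <- Y])%N.
Proof.
move=> HR; apply: leq_trans (count_mem_sumn Y R).
move: HR; rewrite /wd all_count => /eqP <-.
by [].
Qed.

Lemma size_le_tau R : wd R -> (size R <= sumn [seq tau y R | y <- Y])%N.
Proof.
move=> HR; apply: leq_trans (size_le_sumn HR) _; apply: sumn_map_le => y.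
rewrite tauE; apply: sub_count => x /= /eqP ->; exact: cj_refl.
Qed.

Lemma size_reduced R : wd R -> (forall g, count (pred1 g) R <= n)%N ->
  (size R <= n * size Y)%N.
Proof.
move=> HR Hc; apply: leq_trans (size_le_sumn HR) _.
elim: Y => [|y L IH] //=; rewrite mulnS; exact: leq_add.
Qed.

Lemma modn_gap (a b : nat) : (a <= b)%N -> (a %% n = b %% n)%N -> (a < b)%N -> (a + n <= b)%N.
Proof.
move=> Hab Hm Hlt.
have : (n %| b - a)%N by rewrite -eqn_mod_dvd // Hm.
move/dvdn_leq; have : (0 < b - a)%N by lia.
move=> H1 /(_ H1); lia.
Qed.

Lemma pad (t : G -> nat) (Ht : forall y y', cj y y' -> t y = t y') k zs R :
  (size zs <= k)%N -> wd zs -> wd R -> generates R ->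
  (forall y, y \in Y -> [/\ tau y R <= t y, tau y R %% n = t y %% n
       & t y <= n * tau y zs + tau y R]%N) ->
  exists zs' R', [/\ wd zs', wd R', generates R', (forall y, y \in Y -> tau y R' = t y)
     & fs_eq (bw zs ++ R) (bw zs' ++ R')].
Proof.
elim: k zs R => [|k IH] zs R Hk Hzs HR HgR Hc.
  exists zs, R; split=> //; last by apply: fs_refl.
  move: Hk; rewrite leqn0 => /nilP Ez; subst zs.
  move=> y Hy; have [H1 _ H2] := Hc y Hy; move: H2; rewrite (_ : tau y [::] = 0) // muln0 add0n => H2; by apply/eqP; rewrite eqn_leq H1 H2.
case: (boolP (has (fun y => tau y R < t y)%N Y)) => [/hasP[y0 Hy0 Hlt]|Hno]; last first.
  exists zs, R; split=> //; last by apply: fs_refl.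
  move=> y Hy; have [H1 _ _] := Hc y Hy; have := hasPn Hno y Hy; rewrite /=; lia.
rename y0 into y; rename Hy0 into Hy.
have [H1 H2 H3] := Hc y Hy.
have [q Hq Hyq] : exists2 q, q \in zs & cj y q.
  apply: has_cj; move: H3; rewrite /=.
  case E: (tau y zs) => [|m]; last by [].
  rewrite muln0 add0n; lia.
case/splitPr: Hq Hk Hzs Hc => a b Hk Hzs Hc.
move: (Hzs); rewrite word_cat /= => /and3P[Ha HqY Hb].
have P1 : (size (a ++ b) <= k)%N by move: Hk; rewrite !size_cat /=; lia.
have P2 : wd (a ++ b) by rewrite word_cat Ha.
have P3 : wd (B q ++ R) by rewrite word_cat wd_B.
have P4 : generates (B q ++ R) by exact: generates_catl.
have P5 : forall y', y' \in Y -> [/\ tau y' (B q ++ R) <= t y',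
     tau y' (B q ++ R) %% n = t y' %% n & t y' <= n * tau y' (a ++ b) + tau y' (B q ++ R)]%N.
  move=> y' Hy'; have [G1 G2 G3] := Hc y' Hy'.
  move: G3; rewrite tau_cat tau_B !tau_cat tau_cons.
  case: (boolP (cj y' q)) => Hy'q /=; last by rewrite muln0 add0n; split=> //; clear G2; lia.
  have Hyy' : cj y' y by apply: cj_trans Hy'q _; rewrite cj_sym.
  rewrite (Ht _ _ Hyy') (tau_cls R Hyy').
  move=> G3; split.
  + by rewrite muln1 addnC; apply: modn_gap.
  + by rewrite muln1 -modnDml modnn add0n.
  + by move: G3; rewrite mulnDr muln1; clear G2; lia.
have [zs' [R' [W1 W2 W3 W4 E']]] := IH (a ++ b) (B q ++ R) P1 P2 P3 P4 P5.
exists zs', R'; split=> //.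
apply: (fs_eq_trans (t := bw (a ++ b) ++ B q ++ R)); last exact: E'.
rewrite !bw_cat bw_cons -!catA; apply: fs_catl; rewrite !catA; apply: fs_catr.
by apply: B_comm => //; apply: wd_bw.
Qed.

Definition N0 := (n * size Y)%N.
Definition Lam := (size Y * (N0 + n))%N.

Lemma NF s : wd s -> generates s -> (forall y, y \in Y -> N0 + n <= tau y s)%N ->
  exists zs R, [/\ wd zs, wd R, generates R,
    (forall y, y \in Y -> tau y R = N0 + tau y s %% n)%N & fs_eq s (bw zs ++ R)].
Proof.
move=> Hs Hg Hb.
have [zs [R [Wz WR GR CR ER]]] := reduce (leqnn (size s)) Hs Hg.
have Hsz := size_reduced WR CR.
pose t := fun y => (N0 + tau y s %% n)%N.
have Ht : forall y y', cj y y' -> t y = t y' by move=> y y' H; rewrite /t (tau_cls s H).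
have Htau y : tau y s = (n * tau y zs + tau y R)%N by rewrite (tau_fs y ER) tau_cat tau_bw.
have P5 : forall y, y \in Y -> [/\ tau y R <= t y, tau y R %% n = t y %% n
     & t y <= n * tau y zs + tau y R]%N.
  move=> y Hy; have Hle : (tau y R <= N0)%N := leq_trans (count_size _ _) Hsz.
  split.
  - by rewrite /t; apply: leq_trans Hle (leq_addr _ _).
  - by rewrite /t /N0 mulnC modnMDl modn_mod Htau mulnC modnMDl.
  - rewrite -Htau; apply: leq_trans (Hb y Hy); rewrite /t leq_add2l.
    exact: ltnW (ltn_pmod _ Hn0).
have [zs' [R' [W1 W2 W3 W4 E']]] := pad Ht (leqnn (size zs)) Wz WR GR P5.
exists zs', R'; split=> //; exact: fs_eq_trans ER E'.
Qed.

Fixpoint wl k : seq (seq G) :=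
  if k is k'.+1 then [::] :: [seq y :: w | y <- Y, w <- wl k'] else [:: [::]].

Lemma wl_mem k R : wd R -> (size R <= k)%N -> R \in wl k.
Proof.
elim: k R => [|k IH] [|y R] //=; rewrite ?inE //.
move=> /andP[Hy HR] Hs; apply/orP; right; apply: allpairs_f => //; exact: IH.
Qed.

Definition Eb zs R1 R2 := wd zs /\ fs_eq (bw zs ++ R1) (bw zs ++ R2).

Lemma stab (L : seq (seq G * seq G)) : exists K, forall p, p \in L ->
  (exists zs, Eb zs p.1 p.2) -> exists zs, (size zs <= K)%N /\ Eb zs p.1 p.2.
Proof.
elim: L => [|p L [K IH]]; first by exists 0.
case: (pselect (exists zs, Eb zs p.1 p.2)) => [[zs Hzs]|Hno].
- exists (maxn K (size zs)) => p'; rewrite inE => /orP[/eqP->|Hp'] Hex.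
    by exists zs; split=> //; apply: leq_maxr.
  have [zs' [H1 H2]] := IH p' Hp' Hex; exists zs'; split=> //.
  exact: leq_trans H1 (leq_maxl _ _).
- exists K => p'; rewrite inE => /orP[/eqP->|Hp'] Hex; first by case: Hno.
  exact: IH.
Qed.

Lemma delta zs1 zsp : wd zs1 -> wd zsp -> (forall y, y \in Y -> tau y zsp <= tau y zs1)%N ->
  exists d, wd d /\ forall y, y \in Y -> tau y zs1 = tau y (d ++ zsp).
Proof.
elim: zsp zs1 => [|p r IH] zs1 H1 Hp Hle.
  by exists zs1; split=> // y _; rewrite cats0.
move: Hp; rewrite /wd /= => /andP[HpY Hr].
have [q Hq Hpq] : exists2 q, q \in zs1 & cj p q.
  by apply: has_cj; apply: leq_trans (Hle p HpY); rewrite tau_cons cj_refl.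
case/splitPr: Hq H1 Hle => a b H1 Hle.
move: (H1); rewrite word_cat /= => /and3P[Ha Hq Hb].
have W : wd (a ++ b) by rewrite word_cat Ha.
have Hle' : forall y, y \in Y -> (tau y r <= tau y (a ++ b))%N.
  move=> y Hy; have := Hle y Hy; rewrite tau_cons !tau_cat tau_cons (cj_snd y Hpq); lia.
have [d [Wd Hd]] := IH (a ++ b) W Hr Hle'.
exists d; split=> // y Hy; have := Hd y Hy.
rewrite !tau_cat !tau_cons (cj_snd y Hpq); lia.
Qed.

Lemma sumn_bound (L : seq G) (f : G -> nat) c :
  (forall y, y \in L -> f y <= c)%N -> (sumn (map f L) <= size L * c)%N.
Proof.
elim: L => [|y L IH] //= H; rewrite mulSn; apply: leq_add.
  by apply: H; rewrite inE eqxx.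
by apply: IH => z Hz; apply: H; rewrite inE Hz orbT.
Qed.

Lemma CL K : (forall R1 R2, R1 \in wl Lam -> R2 \in wl Lam -> (exists zs, Eb zs R1 R2) ->
     exists zs, (size zs <= K)%N /\ Eb zs R1 R2) ->
  forall s1 s2 (g1 g2 : seq G), wd s1 -> wd s2 -> generates s1 -> generates s2 ->
  (forall y, y \in Y -> N0 + n + n * K <= tau y s1)%N ->
  (forall y, y \in Y -> tau y s2 = tau y s1) ->
  wd g1 -> wd g2 -> (forall y, y \in Y -> tau y g1 = tau y g2) ->
  fs_eq (bw g1 ++ s1) (bw g2 ++ s2) -> fs_eq s1 s2.
Proof.
move=> HK s1 s2 g1 g2 W1 W2 G1 G2 Hb Hs21 Wg1 Wg2 Hg12 E.
have Hb1 : forall y, y \in Y -> (N0 + n <= tau y s1)%N.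
  by move=> y Hy; apply: leq_trans (Hb y Hy); apply: leq_addr.
have Hb2 : forall y, y \in Y -> (N0 + n <= tau y s2)%N by move=> y Hy; rewrite Hs21 // Hb1.
have [zs1 [R1 [Wz1 WR1 GR1 CR1 ER1]]] := NF W1 G1 Hb1.
have [zs2 [R2 [Wz2 WR2 GR2 CR2 ER2]]] := NF W2 G2 Hb2.
have Ht1 y : tau y s1 = (n * tau y zs1 + tau y R1)%N by rewrite (tau_fs y ER1) tau_cat tau_bw.
have Ht2 y : tau y s2 = (n * tau y zs2 + tau y R2)%N by rewrite (tau_fs y ER2) tau_cat tau_bw.
have Hz12 : forall y, y \in Y -> tau y zs1 = tau y zs2.
  move=> y Hy; apply/eqP; rewrite -(eqn_pmul2l Hn0); apply/eqP.
  have : (n * tau y zs1 + (N0 + tau y s1 %% n) = n * tau y zs2 + (N0 + tau y s1 %% n))%N.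
    have E1 := Ht1 y; have E2 := Ht2 y; rewrite CR1 // in E1; rewrite CR2 // !Hs21 // in E2.
    by rewrite -E1 -E2.
  by move/addIn.
have Hin R : wd R -> (forall y, y \in Y -> tau y R = N0 + tau y s1 %% n)%N -> R \in wl Lam.
  move=> WR CR; apply: wl_mem => //; apply: leq_trans (size_le_tau WR) _.
  apply: sumn_bound => y Hy; rewrite CR // leq_add2l; exact: ltnW (ltn_pmod _ Hn0).
have In1 : R1 \in wl Lam by apply: Hin.
have In2 : R2 \in wl Lam by apply: Hin => // y Hy; rewrite CR2 // Hs21.
have Ex : exists zs, Eb zs R1 R2.
  exists (g1 ++ zs1); split; first by rewrite word_cat Wg1.
  rewrite bw_cat -catA.
  apply: (fs_eq_trans (t := bw g1 ++ s1)); first by apply: fs_catl; apply: fs_sym.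
  apply: (fs_eq_trans E).
  apply: (fs_eq_trans (t := bw (g2 ++ zs2) ++ R2)).
    by rewrite bw_cat -catA; apply: fs_catl.
  apply: (fs_eq_trans (t := bw (g1 ++ zs1) ++ R2)); last by rewrite bw_cat -catA; apply: fs_refl.
  apply: bw_canon => //; rewrite ?word_cat ?Wg1 ?Wg2 //.
  by move=> y Hy; rewrite !tau_cat Hg12 // Hz12.
have [zsp [Hsp [Wsp Esp]]] := HK R1 R2 In1 In2 Ex.
have Hle : forall y, y \in Y -> (tau y zsp <= tau y zs1)%N.
  move=> y Hy; apply: leq_trans (count_size _ _) _; apply: leq_trans Hsp _.
  rewrite leqNgt; apply/negP => Hlt.
  have H1 : (n * (tau y zs1).+1 <= n * K)%N := leq_mul (leqnn n) Hlt.
  have := Hb y Hy; rewrite Ht1 CR1 //.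
  have := ltn_pmod (tau y s1) Hn0; move: H1.
  generalize (tau y s1 %% n) => m; rewrite mulnS; lia.
have [d [Wd Hd]] := delta Wz1 Wsp Hle.
have Wdp : wd (d ++ zsp) by rewrite word_cat Wd.
apply: (fs_eq_trans ER1).
apply: (fs_eq_trans (t := bw (d ++ zsp) ++ R1)); first exact: bw_canon.
apply: (fs_eq_trans (t := bw (d ++ zsp) ++ R2)).
  by rewrite bw_cat -!catA; apply: fs_catl.
apply: (fs_eq_trans (t := bw zs1 ++ R2)).
  by apply: bw_canon => // y Hy; rewrite Hd.
apply: (fs_eq_trans (t := bw zs2 ++ R2)); first exact: bw_canon.
exact: fs_sym.
Qed.

Definition approx u v := exists zs zs', [/\ wd zs, wd zs' & fs_eq (u ++ bw zs) (v ++ bw zs')].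

Lemma approx_refl u : approx u u.
Proof. by exists [::], [::]; split=> //; apply: fs_refl. Qed.

Lemma approx_sym u v : approx u v -> approx v u.
Proof. by move=> [zs [zs' [W W' E]]]; exists zs', zs; split=> //; apply: fs_sym. Qed.

Lemma fs_eqE s t : s = t -> fs_eq s t.
Proof. by move=> ->; apply: fs_refl. Qed.

Lemma approx_trans v u w : approx u v -> approx v w -> approx u w.
Proof.
move=> [z1 [z1' [W1 W1' E1]]] [z2 [z2' [W2 W2' E2]]].
exists (z1 ++ z2), (z2' ++ z1'); split; rewrite ?word_cat ?W1 ?W2 ?W1' ?W2' //.
apply: (fs_eq_trans (t := (u ++ bw z1) ++ bw z2)).
  by apply: fs_eqE; rewrite bw_cat catA.
apply: (fs_eq_trans (t := (v ++ bw z1') ++ bw z2)); first exact: fs_catr.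
apply: (fs_eq_trans (t := v ++ (bw z2 ++ bw z1'))).
  apply: (fs_eq_trans (t := v ++ (bw z1' ++ bw z2))); first by apply: fs_eqE; rewrite catA.
  by apply: fs_catl; apply: bw_comm => //; apply: wd_bw.
apply: (fs_eq_trans (t := (w ++ bw z2') ++ bw z1')).
  apply: (fs_eq_trans (t := (v ++ bw z2) ++ bw z1')); first by apply: fs_eqE; rewrite catA.
  exact: fs_catr.
by apply: fs_eqE; rewrite bw_cat catA.
Qed.

Lemma approx_catr w u v : wd w -> approx u v -> approx (u ++ w) (v ++ w).
Proof.
move=> Ww [zs [zs' [W W' E]]]; exists zs, zs'; split=> //.
rewrite -!catA.
apply: (fs_eq_trans (t := u ++ bw zs ++ w)); first by apply: fs_catl; apply: fs_sym; apply: bw_comm.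
rewrite !catA.
apply: (fs_eq_trans (t := (v ++ bw zs') ++ w)); first exact: fs_catr.
rewrite -!catA; apply: fs_catl; exact: bw_comm.
Qed.

Definition sat (P : seq G -> Prop) := forall u v, approx u v -> P u -> P v.
Definition XT := {P : seq G -> Prop | sat P}.

Lemma sat_eq (P : XT) u v : approx u v -> sval P u = sval P v.
Proof.
case: P => P HP /= H; apply: propext; split; apply: HP => //; exact: approx_sym.
Qed.

Definition shiftP (w : seq G) (P : seq G -> Prop) := fun u => P (u ++ w).

Lemma sat_shift w P : wd w -> sat P -> sat (shiftP w P).
Proof. by move=> Ww HP u v H; apply: HP; apply: approx_catr. Qed.

Section Act.
Variable y0 : G.
Hypothesis Hy0 : y0 \in Y.

Lemma wd1 : wd [:: y0]. Proof. by rewrite /wd /= Hy0. Qed.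
Lemma wdn : wd (nseq n.-1 y0). Proof. by rewrite /wd all_nseq Hy0 orbT. Qed.

Definition actf (P : XT) : XT := exist sat (shiftP [:: y0] (sval P)) (sat_shift wd1 (svalP P)).
Definition actg (P : XT) : XT := exist sat (shiftP (nseq n.-1 y0) (sval P)) (sat_shift wdn (svalP P)).

Lemma nseq_rcons m (x : G) : nseq m x ++ [:: x] = x :: nseq m x.
Proof. by elim: m => //= m ->. Qed.

Lemma approx_B u : approx (u ++ B y0) u.
Proof.
exists [::], [:: y0]; split; rewrite ?wd1 //.
rewrite /bw /= !cats0; apply: fs_refl.
Qed.

Lemma nB : nseq n.-1 y0 ++ [:: y0] = B y0.
Proof. by rewrite nseq_rcons /B -[in RHS](prednK Hn0). Qed.
Lemma nB' : y0 :: nseq n.-1 y0 = B y0.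
Proof. by rewrite /B -[in RHS](prednK Hn0). Qed.

Lemma actfK : cancel actf actg.
Proof.
case=> P HP; apply: eq_exist; apply: funext => u; rewrite /shiftP /=.
have := sat_eq (exist sat P HP) (approx_B u) => /= <-.
by congr P; rewrite -catA nB.
Qed.

Lemma actgK : cancel actg actf.
Proof.
case=> P HP; apply: eq_exist; apply: funext => u; rewrite /shiftP /=.
have := sat_eq (exist sat P HP) (approx_B u) => /= <-.
by congr P; rewrite -catA /= nB'.
Qed.

Definition actp : xperm XT := XPerm actfK actgK.
End Act.

Definition fA (y : G) : xperm XT :=
  match pselect (y \in Y) with left H => actp H | right _ => 1 end.

Lemma fA_in y (H : y \in Y) : fA y = actp H.
Proof.
rewrite /fA; case: pselect => [H'|//]; by rewrite (Prop_irrelevance H' H).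
Qed.

Lemma nB_gen z : nseq n.-1 z ++ [:: z] = B z.
Proof. by rewrite nseq_rcons /B -[in RHS](prednK Hn0). Qed.

Lemma approx_rel u y z : y \in Y -> z \in Y ->
  approx (u ++ [:: y ^ z]) (((u ++ nseq n.-1 z) ++ [:: y]) ++ [:: z]).
Proof.
move=> Hy Hz; exists [:: z], [::]; split; rewrite /wd /= ?Hz //.
apply: fs_sym.
apply: (fs_eq_trans (t := u ++ nseq n.-1 z ++ [:: y; z])).
  by apply: fs_eqE; rewrite /bw /= cats0 -!catA.
apply: (fs_eq_trans (t := u ++ nseq n.-1 z ++ [:: z; y ^ z])).
  apply: fs_catl; apply: fs_catl; apply: fs_of_step.
  by have := @fs_step1 G [::] [::] y z; rewrite /= .
apply: (fs_eq_trans (t := u ++ B z ++ [:: y ^ z])).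
  by apply: fs_eqE; rewrite -nB_gen -catA.
apply: (fs_eq_trans (t := u ++ [:: y ^ z] ++ B z)).
  by apply: fs_catl; apply: B_comm => //; rewrite /wd /= HY.
apply: fs_eqE; rewrite /bw /= cats0; exact: (catA u [:: y ^ z] (B z)).
Qed.

Lemma act_prod s : wd s -> forall (P : XT) w,
  sval (pf (foldr (fun x r => fA x * r) 1 s) P) w = sval P (w ++ s).
Proof.
elim: s => [|x s IH] /=; first by move=> _ P w; rewrite cats0.
move=> /andP[Hx Hs] P w; rewrite (fA_in Hx) /= /shiftP IH //.
exact: (congr1 (sval P) (esym (catA w [:: x] s))).
Qed.

Lemma approx_univ : (forall (H : groupType) (f : G -> H),
        (forall y z, y \in Y -> z \in Y -> f (y ^ z) = f y ^ f z) ->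
        exists phi : G -> H,
          (forall p q : G, phi (p * q) = phi p * phi q) /\
          (forall y, y \in Y -> phi y = f y)) ->
  forall s1 s2, wd s1 -> wd s2 -> alphaG s1 = alphaG s2 -> approx s2 s1.
Proof.
move=> Huniv s1 s2 W1 W2 Ha.
have Hrel : forall y z, y \in Y -> z \in Y -> fA (y ^ z) = fA y ^ fA z.
  move=> y z Hy Hz; rewrite (fA_in (HY z Hy)) (fA_in Hy) (fA_in Hz).
  apply: xperm_eq; apply: funext => -[P HP] /=.
  apply: eq_exist; apply: funext => u; rewrite /shiftP /=.
  exact: (sat_eq (exist sat P HP) (approx_rel u Hy Hz)).
have [phi [phiM phiY]] := Huniv _ fA Hrel.
have Hs : sat (fun w => approx w s1).
  by move=> u v Huv Hu; apply: approx_trans Hu; apply: approx_sym.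
pose P0 : XT := exist sat (fun w => approx w s1) Hs.
have E1 := act_prod W1 P0 [::]; have E2 := act_prod W2 P0 [::].
rewrite -(phi_alpha phiM phiY W1) Ha (phi_alpha phiM phiY W2) in E1.
have : sval P0 ([::] ++ s2) by rewrite -E2 E1; exact: approx_refl.
by [].
Qed.

End Blocks.


Section Final.
Variable G : groupType.
Variable Y : seq G.
Hypothesis HY : forall y g, y \in Y -> y ^ g \in Y.

Lemma fix_commute (c z : G) : z ^ c = z -> commute c z.
Proof.
move=> E; rewrite /commute; have := congr1 (fun w => c * w) E.
by rewrite conjgE mulVKg => ->.
Qed.

Lemma commuteXl (c z : G) k : commute c z -> commute (c ^+ k) z.
Proof. by move=> H; apply: commute_sym; apply: commuteX; apply: commute_sym. Qed.

Lemma exists_m y : y \in Y -> exists m, (0 < m)%N /\ forall z, z \in Y -> commute (y ^+ m) z.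
Proof.
move=> Hy.
pose W := wl Y (size Y).
pose Ls := [seq map (fun z => z ^ (y ^+ k)) Y | k <- iota 0 (size W).+1].
have HLs : {subset Ls <= W}.
  move=> L /mapP[k _ ->]; apply: wl_mem; last by rewrite size_map.
  by apply/allP => x /mapP[z Hz ->]; apply: HY.
have : ~~ uniq Ls.
  apply/negP => U; have := uniq_leq_size U HLs.
  by rewrite size_map size_iota ltnn.
case/(uniqPn [::]) => i [j [Hij Hj Eij]].
move: Hj; rewrite size_map size_iota => Hj.
have Hi : (i < (size W).+1)%N by exact: ltn_trans Hij Hj.
rewrite !(nth_map 0) ?size_iota // !nth_iota // !add0n in Eij.
exists (j - i)%N; split; first by rewrite subn_gt0.
move=> z Hz.
have E1 : z ^ (y ^+ i) = z ^ (y ^+ j).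
  by have := congr1 (fun L => nth 1 L (index z Y)) Eij; rewrite !(nth_map z) ?index_mem // nth_index.
have E2 : (z ^ y ^+ (j - i)) ^ y ^+ i = z ^ y ^+ i.
  by rewrite -conjgM -expgnDr subnK ?(ltnW Hij) // E1.
by apply: fix_commute; move/conjg_inj: E2.
Qed.

Lemma exists_n : exists n, (0 < n)%N /\ forall y z, y \in Y -> z \in Y -> commute (y ^+ n) z.
Proof.
suff: forall L : seq G, {subset L <= Y} -> exists n, (0 < n)%N /\
    forall y z, y \in L -> z \in Y -> commute (y ^+ n) z.
  by move=> /(_ Y (fun x Hx => Hx)).
elim=> [|y L IH] HL.
  by exists 1%N; split.
have Hy : y \in Y by apply: HL; rewrite inE eqxx.
have [m [Hm0 Hm]] := exists_m Hy.
have [nL [HnL0 HnL]] := IH (fun x Hx => HL x (@mem_behead _ (y :: L) x Hx)).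
exists (m * nL)%N; split; first by rewrite muln_gt0 Hm0.
move=> y' z; rewrite inE => /orP[/eqP->|Hy'] Hz.
  by rewrite expgnA; apply: commuteXl; apply: Hm.
by rewrite mulnC expgnA; apply: commuteXl; apply: HnL.
Qed.

Definition ztr : xperm BinNums.Z :=
  @XPerm BinNums.Z BinInt.Z.succ BinInt.Z.pred BinInt.Z.pred_succ BinInt.Z.succ_pred.

Definition fC (c y : G) : xperm BinNums.Z := if cj c y then ztr else 1.

Lemma fC_prod c s : pf (foldr (fun x r => fC c x * r) 1 s) BinNums.Z0 = BinInt.Z.of_nat (tau c s).
Proof.
elim: s => [|x s IH]; first by [].
rewrite xpermM IH tau_cons /fC; case: (cj c x).
  by rewrite add1n Znat.Nat2Z.inj_succ.
by rewrite add0n.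
Qed.

Lemma counts_univ : (forall (H : groupType) (f : G -> H),
        (forall y z, y \in Y -> z \in Y -> f (y ^ z) = f y ^ f z) ->
        exists phi : G -> H,
          (forall p q : G, phi (p * q) = phi p * phi q) /\
          (forall y, y \in Y -> phi y = f y)) ->
  forall c s1 s2, wd Y s1 -> wd Y s2 -> alphaG s1 = alphaG s2 -> tau c s1 = tau c s2.
Proof.
move=> Huniv c s1 s2 W1 W2 Ha.
have Hrel : forall y z, y \in Y -> z \in Y -> fC c (y ^ z) = fC c y ^ fC c z.
  move=> y z _ _; rewrite /fC cj_conj.
  case: (cj c y); case: (cj c z); rewrite ?conjg1 ?conj1g //.
  by rewrite conjgE mulKg.
have [phi [phiM phiY]] := Huniv _ (fC c) Hrel.
have := fC_prod c s1; have := fC_prod c s2.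
rewrite -(phi_alpha phiM phiY W1) -(phi_alpha phiM phiY W2) Ha => -> E.
exact: Znat.Nat2Z.inj.
Qed.
End Final.

Unset Implicit Arguments.

Theorem theorem4p1 (G : groupType) (Y : seq G) :
  is_Cgroup Y ->
  exists T : nat,
    forall s1 s2 : seq G,
      is_word Y s1 -> is_word Y s2 ->
      generates s1 -> generates s2 ->
      (forall y, y \in Y -> (T <= tau y s1)%N) ->
      alphaG s1 = alphaG s2 ->
      fs_eq s1 s2.
Proof.
case=> _ HY _ Huniv.
have [n [Hn0 Hn]] := exists_n HY.
have [K HK] := stab Y n [seq (x, y) | x <- wl Y (Lam Y n), y <- wl Y (Lam Y n)].
exists (N0 Y n + n + n * K)%N => s1 s2 W1 W2 G1 G2 Hb Ha.
have Hc : forall y, y \in Y -> tau y s2 = tau y s1.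
  by move=> y Hy; apply: esym; apply: (counts_univ Huniv).
have [zs [zs' [Wz Wz' E]]] := approx_univ HY Hn0 Hn Huniv W1 W2 Ha.
have HK' : forall R1 R2, R1 \in wl Y (Lam Y n) -> R2 \in wl Y (Lam Y n) ->
    (exists zs, Eb Y n zs R1 R2) -> exists zs, (size zs <= K)%N /\ Eb Y n zs R1 R2.
  move=> R1 R2 H1 H2 Hex.
  exact: (HK (R1, R2) (allpairs_f pair H1 H2) Hex).
apply: (CL HY Hn0 Hn HK' W1 W2 G1 G2 Hb Hc Wz' Wz).
- move=> y Hy; apply/eqP; rewrite -(eqn_pmul2l Hn0); apply/eqP.
  have := tau_fs y E; rewrite !tau_cat !tau_bw Hc //.
  by move/addnI/esym.
- apply: (fs_eq_trans (t := s1 ++ bw n zs')); first exact: (bw_comm Hn Wz' W1).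
  apply: (fs_eq_trans (t := s2 ++ bw n zs)); first exact: fs_sym.
  apply: fs_sym; exact: (bw_comm Hn Wz W2).
Qed.
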